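(* Let $n\ge 2$ be an integer and let $G_n=\langle a,b \mid (ab)^n\rangle$. For every rational number $s\in[1/n,1]$ and every nonzero integer $t$, the element $u_s$ is not conjugate in $G_n$ to $a^t$ nor to $b^t$. (That is, $\alpha_s$ is not peripheral in the even Heckoid orbifold of index $n$ for the trivial knot.)
   Context: Words $u_s\in F(a,b)$ for rational $0<s\le1$: write $s=q/p$ with $p\ge1$, $\gcd(p,q)=1$, and set $\epsilon_i=(-1)^{\lfloor iq/p\rfloor}$ for $1\le i\le p-1$. If $p$ is odd, $u_{q/p}=a\,\hat u\, b^{(-1)^q}\,\hat u^{-1}$ with $\hat u=b^{\epsilon_1}a^{\epsilon_2}\cdots b^{\epsilon_{p-2}}a^{\epsilon_{p-1}}$ (letters alternate $b,a,\dots$; empty if $p=1$). If $p$ is even, $u_{q/p}=a\,\hat u\,a^{-1}\,\hat u^{-1}$ with $\hat u=b^{\epsilon_1}a^{\epsilon_2}\cdots a^{\epsilon_{p-2}}b^{\epsilon_{p-1}}$. The generators $a,b$ are meridians; a loop is peripheral iff it represents the conjugacy class of a power of a meridian. *)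

(* Defs.v *)
From Stdlib Require Import List Arith ZArith Relations.
Import ListNotations.

(* A letter is (generator, sign): generator true = a, false = b;
   sign true = exponent +1, false = exponent -1. *)
Definition letter := (bool * bool)%type.
Definition word := list letter.

Definition ga : bool := true.
Definition gb : bool := false.

Definition inv_letter (l : letter) : letter := (fst l, negb (snd l)).
Definition inv_word (w : word) : word := rev (map inv_letter w).

Definition gpow (g : bool) (t : Z) : word :=
  if (0 <=? t)%Z then repeat (g, true) (Z.to_nat t)
  else repeat (g, false) (Z.to_nat (- t)).

Definition relator (n : nat) : word :=
  concat (repeat [(ga, true); (gb, true)] n).

Inductive gstep (n : nat) : word -> word -> Prop :=
| gstep_free : forall w1 w2 l, gstep n (w1 ++ [l; inv_letter l] ++ w2) (w1 ++ w2)
| gstep_rel : forall w1 w2, gstep n (w1 ++ relator n ++ w2) (w1 ++ w2)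
| gstep_relinv : forall w1 w2, gstep n (w1 ++ inv_word (relator n) ++ w2) (w1 ++ w2).

Definition geq (n : nat) : word -> word -> Prop := clos_refl_sym_trans word (gstep n).

Definition gconj (n : nat) (u v : word) : Prop :=
  exists g : word, geq n (g ++ u ++ inv_word g) v.

(* epsilon_i = (-1)^floor(i q / p), encoded as sign: true iff +1 *)
Definition eps (q p i : nat) : bool := Nat.even (i * q / p).

Definition uhat (q p : nat) : word :=
  map (fun i => (if Nat.odd i then gb else ga, eps q p i)) (seq 1 (p - 1)).

Definition u_word (q p : nat) : word :=
  [(ga, true)] ++ uhat q p ++
  (if Nat.odd p then [(gb, Nat.even q)] else [(ga, false)]) ++
  inv_word (uhat q p).

(* Main.v *)
Require Import Defs.
From Stdlib Require Import List Arith ZArith Relations Lia.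
Import ListNotations.

Definition sumw (f : letter -> Z) (w : word) : Z :=
  fold_right (fun l acc => (f l + acc)%Z) 0%Z w.

Lemma sumw_app f w1 w2 : sumw f (w1 ++ w2) = (sumw f w1 + sumw f w2)%Z.
Proof. induction w1; simpl; [lia|]. unfold sumw in *; simpl; rewrite IHw1; lia. Qed.

Lemma sumw_rev f w : sumw f (rev w) = sumw f w.
Proof. induction w; simpl; auto. rewrite sumw_app, IHw. unfold sumw; simpl; lia. Qed.

Definition fD (l : letter) : Z :=
  ((if snd l then 1 else -1) * (if fst l then 1 else -1))%Z.
Definition fA (l : letter) : Z :=
  if fst l then (if snd l then 1 else -1)%Z else 0%Z.

Lemma sumw_inv f w : (forall l, f (inv_letter l) = - f l)%Z ->
  sumw f (inv_word w) = (- sumw f w)%Z.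
Proof.
  intros H. unfold inv_word. rewrite sumw_rev.
  induction w; simpl; auto. unfold sumw in *; simpl. rewrite H, IHw. lia.
Qed.

Lemma fD_inv l : fD (inv_letter l) = (- fD l)%Z.
Proof. destruct l as [[] []]; reflexivity. Qed.
Lemma fA_inv l : fA (inv_letter l) = (- fA l)%Z.
Proof. destruct l as [[] []]; reflexivity. Qed.

Lemma sumw_rel f n : sumw f (relator n) = (Z.of_nat n * (f (ga,true) + f (gb,true)))%Z.
Proof.
  unfold relator. induction n; auto.
  change (concat (repeat [(ga, true); (gb, true)] (S n))) with
    ([(ga, true); (gb, true)] ++ concat (repeat [(ga, true); (gb, true)] n)).
  rewrite sumw_app, IHn. rewrite Nat2Z.inj_succ. unfold sumw at 1; cbn [fold_right]. lia.
Qed.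

Lemma step_inv n w1 w2 : gstep n w1 w2 ->
  sumw fD w1 = sumw fD w2 /\ (Z.of_nat n | sumw fA w1 - sumw fA w2)%Z.
Proof.
  intros H; destruct H.
  - rewrite !sumw_app. split.
    + unfold sumw at 2; simpl. rewrite fD_inv. lia.
    + unfold sumw at 2; simpl. rewrite fA_inv. exists 0%Z. lia.
  - rewrite !sumw_app, !sumw_rel. split.
    + unfold fD; simpl; lia.
    + unfold fA; simpl. exists 1%Z. lia.
  - rewrite !sumw_app, !sumw_inv, !sumw_rel by (apply fD_inv || apply fA_inv). split.
    + unfold fD; simpl; lia.
    + unfold fA; simpl. exists (-1)%Z. lia.
Qed.

Lemma geq_inv n w1 w2 : geq n w1 w2 ->
  sumw fD w1 = sumw fD w2 /\ (Z.of_nat n | sumw fA w1 - sumw fA w2)%Z.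
Proof.
  intros H; induction H.
  - now apply step_inv.
  - split; [reflexivity | exists 0%Z; lia].
  - destruct IHclos_refl_sym_trans as [H1 [k Hk]]. split; [auto| exists (-k)%Z; lia].
  - destruct IHclos_refl_sym_trans1 as [H1 [k Hk]].
    destruct IHclos_refl_sym_trans2 as [H2 [m Hm]].
    split; [lia | exists (k+m)%Z; lia].
Qed.

Lemma conj_inv n u v : gconj n u v ->
  sumw fD u = sumw fD v /\ (Z.of_nat n | sumw fA u - sumw fA v)%Z.
Proof.
  intros [g Hg]. apply geq_inv in Hg.
  rewrite !sumw_app, sumw_inv, (sumw_inv fA) in Hg by (apply fD_inv || apply fA_inv).
  destruct Hg as [H1 [k Hk]]. split; [lia| exists k; lia].
Qed.

Lemma sumw_repeat f l k : sumw f (repeat l k) = (Z.of_nat k * f l)%Z.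
Proof. induction k; auto. rewrite Nat2Z.inj_succ. unfold sumw in *; cbn [repeat fold_right]; rewrite IHk; lia. Qed.

Lemma gpow_sum g t : sumw fD (gpow g t) = (if g then t else -t)%Z /\
                     sumw fA (gpow g t) = (if g then t else 0)%Z.
Proof.
  unfold gpow. destruct (0 <=? t)%Z eqn:E.
  - apply Z.leb_le in E. rewrite !sumw_repeat.
    destruct g; unfold fD, fA; simpl; split; lia.
  - apply Z.leb_gt in E. rewrite !sumw_repeat.
    destruct g; unfold fD, fA; simpl; split; lia.
Qed.

Lemma u_sum q p :
  (sumw fD (u_word q p) = if Nat.odd p then (if Nat.even q then 0 else 2) else 0)%Z /\
  (sumw fA (u_word q p) = if Nat.odd p then 1 else 0)%Z.
Proof.
  unfold u_word. rewrite !sumw_app, sumw_inv, (sumw_inv fA) by (apply fD_inv || apply fA_inv).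
  generalize (sumw fD (uhat q p)) (sumw fA (uhat q p)); intros x y.
  destruct (Nat.odd p), (Nat.even q); unfold sumw, fD, fA; cbv [ga gb]; cbn [fold_right fst snd]; split; lia.
Qed.

Theorem theorem2p2 :
  forall (n p q : nat),
    2 <= n ->
    1 <= p -> Nat.gcd p q = 1 ->
    q <= p -> p <= n * q ->
    forall t : Z, t <> 0%Z ->
      ~ gconj n (u_word q p) (gpow ga t) /\ ~ gconj n (u_word q p) (gpow gb t).
Proof.
  intros n p q Hn _ _ _ _ t Ht.
  destruct (u_sum q p) as [UD UA].
  assert (Hnd : forall z, (Z.of_nat n | z)%Z -> z = 1%Z \/ z = (-1)%Z -> False).
  { intros z [k Hk] Hz. assert (2 <= Z.of_nat n)%Z by lia. remember (Z.of_nat n) as N. clear HeqN.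
    destruct (Z.le_gt_cases k 0).
    - destruct (Z.eq_dec k 0). subst; lia. assert (k * N <= -2)%Z by nia. lia.
    - assert (k * N >= 2)%Z by nia. lia. }
  split; intros Hc; apply conj_inv in Hc;
    destruct (gpow_sum ga t) as [GD GA]; destruct (gpow_sum gb t) as [GD' GA'];
    simpl in *; destruct Hc as [Hd Hdv].
  - rewrite UD, GD in Hd. rewrite UA, GA in Hdv.
    destruct (Nat.odd p), (Nat.even q); try lia.
    assert (t = 2%Z) by lia; subst. apply (Hnd _ Hdv). lia.
  - rewrite UD, GD' in Hd. rewrite UA, GA' in Hdv.
    destruct (Nat.odd p), (Nat.even q); try lia.
    apply (Hnd _ Hdv). lia.
Qed.
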